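(* Under the setting of the context, for every $\boldsymbol{\alpha}\in\mathbb{R}^n$ and $\boldsymbol{\beta}\in\mathbb{R}^{dn}$, the function $$f_{\boldsymbol{\alpha},\boldsymbol{\beta}}=\sum_{i=1}^n\alpha_i k_{\mathbf{x}^i}+\sum_{i=1}^n\sum_{a=1}^d\beta_{ai}[\partial_a k_{\mathbf{x}^i}]$$ satisfies $\widehat{\mathcal{L}}(f_{\boldsymbol{\alpha},\boldsymbol{\beta}})=\mathcal{J}_1(\boldsymbol{\alpha},\boldsymbol{\beta})$, $\widehat{\mathcal{R}}(f_{\boldsymbol{\alpha},\boldsymbol{\beta}})=\mathcal{J}_2(\boldsymbol{\alpha},\boldsymbol{\beta})$ and $\|f_{\boldsymbol{\alpha},\boldsymbol{\beta}}\|_{\mathcal{F}}^2=\mathcal{J}_3(\boldsymbol{\alpha},\boldsymbol{\beta})$, where $$\mathcal{J}_1=\tfrac1n\|\mathbf{y}-\mathbf{K}\boldsymbol{\alpha}-\mathbf{D}^T\boldsymbol{\beta}\|_2^2,\qquad \mathcal{J}_3=\boldsymbol{\alpha}^T\mathbf{K}\boldsymbol{\alpha}+2\boldsymbol{\alpha}^T\mathbf{D}^T\boldsymbol{\beta}+\boldsymbol{\beta}^T\mathbf{L}\boldsymbol{\beta},$$ and $\mathcal{J}_2$ depends on the regularizer: for $\widehat{\mathcal{R}}^L$: $\mathcal{J}_2=\frac1{\sqrt n}\sum_{a=1}^d\|\mathbf{D}^a\boldsymbol{\alpha}+\mathbf{L}^a\boldsymbol{\beta}\|_2$; for $\widehat{\mathcal{R}}^{GL}$: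 $\mathcal{J}_2=\frac1{\sqrt n}\sum_{g=1}^G p_g\|\ddot{\mathbf{D}}^g\boldsymbol{\alpha}+\ddot{\mathbf{L}}^g\boldsymbol{\beta}\|_2$; for $\widehat{\mathcal{R}}^{EN}$: $\mathcal{J}_2=\frac{\mu}{\sqrt n}\sum_{a=1}^d\|\mathbf{D}^a\boldsymbol{\alpha}+\mathbf{L}^a\boldsymbol{\beta}\|_2+\frac{1-\mu}{n}\sum_{a=1}^d\|\mathbf{D}^a\boldsymbol{\alpha}+\mathbf{L}^a\boldsymbol{\beta}\|_2^2$. Consequently the problem $\min_{f\in\mathcal{F}}\widehat{\mathcal{L}}(f)+\tau\widehat{\mathcal{R}}(f)+\nu\|f\|_{\mathcal{F}}^2$ ($\tau,\nu\ge0$) is equivalent to $\min_{\boldsymbol{\alpha},\boldsymbol{\beta}}\mathcal{J}_1+\tau\mathcal{J}_2+\nu\mathcal{J}_3$: both have the same infimum, and $(\boldsymbol{\alpha}^*,\boldsymbol{\beta}^* )$ minimises the latter if and only if $f_{\boldsymbol{\alpha}^*,\boldsymbol{\beta}^*}$ minimises the former.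
   Context: Setting: $\mathcal{X}\subseteq\mathbb{R}^d$ open; $k$ a symmetric positive semidefinite kernel in $C^2(\mathcal{X}\times\mathcal{X})$ with RKHS $\mathcal{F}$; $k_{\mathbf{x}}(\mathbf{x}')=k(\mathbf{x},\mathbf{x}')$; $[\partial_a k_{\mathbf{x}}](\mathbf{x}')=\frac{\partial}{\partial x_a}k(\mathbf{x},\mathbf{x}')$ (derivative in the first argument). These satisfy $\langle k_{\mathbf{x}},f\rangle_{\mathcal{F}}=f(\mathbf{x})$, $[\partial_a k_{\mathbf{x}}]\in\mathcal{F}$, $\langle[\partial_a k_{\mathbf{x}}],f\rangle_{\mathcal{F}}=\partial_a f(\mathbf{x})$. Data $(\mathbf{x}^i,y^i)\in\mathcal{X}\times\mathbb{R}$, $i=1,\dots,n$, $\mathbf{y}=(y^1,\dots,y^n)^T$. Loss and regularizers: $\widehat{\mathcal{L}}(f)=\frac1n\sum_i(y^i-f(\mathbf{x}^i))^2$; $\|\partial_a f\|_{2_n}=\sqrt{\frac1n\sum_i|\partial_a f(\mathbf{x}^i)|^2}$; $\widehat{\mathcal{R}}^L(f)=\sum_a\|\partial_a f\|_{2_n}$; for a partition of $\{1,\dots,d\}$ into groups $g=1,\dots,G$ with $p_g$ elements, $\widehat{\mathcal{R}}^{GL}(f)=\sum_g p_g\sqrt{\sum_{a\in g}\|\partial_af\|_{2_n}^2}$; for $\mu\in[0,1]$, $\widehat{\mathcal{R}}^{EN}(f)=\mu\sum_a\|\partial_af\|_{2_n}+(1-\mu)\sum_a\|\partial_af\|_{2_n}^2$.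 Matrices: $\boldsymbol{\alpha}=(\alpha_1,\dots,\alpha_n)^T$; $\boldsymbol{\beta}=(\beta_{11},\dots,\beta_{1n},\beta_{21},\dots,\beta_{dn})^T$. $\mathbf{K}\in\mathbb{R}^{n\times n}$, $K_{ij}=k(\mathbf{x}^i,\mathbf{x}^j)$. $\mathbf{D}^a\in\mathbb{R}^{n\times n}$, $D^a_{ij}=[\partial_a k_{\mathbf{x}^i}](\mathbf{x}^j)$. $\mathbf{L}^{ab}\in\mathbb{R}^{n\times n}$, $L^{ab}_{ij}=\frac{\partial^2}{\partial s_a\partial r_b}k(\mathbf{s},\mathbf{r})\big|_{\mathbf{s}=\mathbf{x}^i,\mathbf{r}=\mathbf{x}^j}$. $\mathbf{D}\in\mathbb{R}^{dn\times n}$ is the vertical stack of $\mathbf{D}^1,\dots,\mathbf{D}^d$; $\mathbf{L}^a=[\mathbf{L}^{a1}\cdots\mathbf{L}^{ad}]\in\mathbb{R}^{n\times dn}$; $\mathbf{L}\in\mathbb{R}^{dn\times dn}$ is the vertical stack of $\mathbf{L}^1,\dots,\mathbf{L}^d$. For a group $g=\{g_1,\dots,g_{p_g}\}$, $\ddot{\mathbf{D}}^g$ is the vertical stack of $\mathbf{D}^{g_1},\dots,\mathbf{D}^{g_{p_g}}$ and $\ddot{\mathbf{L}}^g$ the vertical stack of $\mathbf{L}^{g_1},\dots,\mathbf{L}^{g_{p_g}}$. *)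

(* Defs.v *)
From Stdlib Require Import Reals Lra ClassicalEpsilon.
Set Implicit Arguments.
Open Scope R_scope.

(** Points of R^d are represented as [nat -> R]; a point "of R^d" is one whose
    coordinates of index >= d vanish.  Coordinates and indices are 0-based. *)
Definition pt := nat -> R.

Fixpoint sumR (m : nat) (f : nat -> R) : R :=
  match m with O => 0 | S m' => sumR m' f + f m' end.

Definition in_Rd (d : nat) (x : pt) : Prop := forall j, (d <= j)%nat -> x j = 0.
Definition dist (d : nat) (x y : pt) : R := sumR d (fun j => Rabs (x j - y j)).

Definition open_in_Rd (d : nat) (X : pt -> Prop) : Prop :=
  forall x, X x -> in_Rd d x /\
    exists eps, 0 < eps /\ forall z, in_Rd d z -> dist d x z < eps -> X z.

Definition upd (x : pt) (a : nat) (t : R) : pt :=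
  fun j => if Nat.eqb j a then t else x j.
Definition pd (g : pt -> R) (a : nat) (x : pt) (l : R) : Prop :=
  derivable_pt_lim (fun t => g (upd x a t)) (x a) l.
(** The value of the partial derivative (meaningful when it exists). *)
Definition pderiv (g : pt -> R) (a : nat) (x : pt) : R :=
  epsilon (inhabits 0) (fun l => pd g a x l).

Definition symmetric_on (X : pt -> Prop) (k : pt -> pt -> R) : Prop :=
  forall s r, X s -> X r -> k s r = k r s.
Definition psd_on (X : pt -> Prop) (k : pt -> pt -> R) : Prop :=
  forall (m : nat) (c : nat -> R) (z : nat -> pt),
    (forall i, (i < m)%nat -> X (z i)) ->
    0 <= sumR m (fun i => sumR m (fun j => c i * c j * k (z i) (z j))).
Definition cont2_on (d : nat) (X : pt -> Prop) (h : pt -> pt -> R) : Prop :=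
  forall s r, X s -> X r -> forall eps, 0 < eps -> exists del, 0 < del /\
    forall s' r', X s' -> X r' -> dist d s s' < del -> dist d r r' < del ->
      Rabs (h s' r' - h s r) < eps.
(** A direction (false, a) = d/ds_a (first argument), (true, b) = d/dr_b (second). *)
Definition pd2 (h : pt -> pt -> R) (v : bool * nat) (s r : pt) (l : R) : Prop :=
  if fst v then pd (fun r' => h s r') (snd v) r l
  else pd (fun s' => h s' r) (snd v) s l.
Definition der2 (h : pt -> pt -> R) (v : bool * nat) : pt -> pt -> R :=
  fun s r => if fst v then pderiv (fun r' => h s r') (snd v) r
             else pderiv (fun s' => h s' r) (snd v) s.
Definition C1_on (d : nat) (X : pt -> Prop) (h : pt -> pt -> R) : Prop :=
  cont2_on d X h /\
  forall v, (snd v < d)%nat ->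
    (forall s r, X s -> X r -> exists l, pd2 h v s r l) /\ cont2_on d X (der2 h v).
Definition C2_on (d : nat) (X : pt -> Prop) (h : pt -> pt -> R) : Prop :=
  C1_on d X h /\ forall v, (snd v < d)%nat -> C1_on d X (der2 h v).

(** The RKHS F of k: a real Hilbert space of functions on X (elements [f],
    viewed as functions via [fn f], restricted to X), with the reproducing
    property and the derivative reproducing property stated in the context. *)
Record RKHS (d : nat) (X : pt -> Prop) (k : pt -> pt -> R) : Type := {
  elt : Type;
  hzero : elt;
  hadd : elt -> elt -> elt;
  hscal : R -> elt -> elt;
  inner : elt -> elt -> R;
  fn : elt -> pt -> R;
  kx : pt -> elt;
  dkx : nat -> pt -> elt;
  fn_zero : forall z, X z -> fn hzero z = 0;
  fn_add : forall f g z, X z -> fn (hadd f g) z = fn f z + fn g z;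
  fn_scal : forall c f z, X z -> fn (hscal c f) z = c * fn f z;
  fn_ext : forall f g, (forall z, X z -> fn f z = fn g z) -> f = g;
  inner_sym : forall f g, inner f g = inner g f;
  inner_add : forall f g h, inner (hadd f g) h = inner f h + inner g h;
  inner_scal : forall c f g, inner (hscal c f) g = c * inner f g;
  inner_pos : forall f, 0 <= inner f f;
  inner_def : forall f, inner f f = 0 -> f = hzero;
  complete : forall s : nat -> elt,
    (forall eps, 0 < eps -> exists N, forall p q, (N <= p)%nat -> (N <= q)%nat ->
       inner (hadd (s p) (hscal (-1) (s q))) (hadd (s p) (hscal (-1) (s q))) < eps) ->
    exists l, forall eps, 0 < eps -> exists N, forall p, (N <= p)%nat ->
       inner (hadd (s p) (hscal (-1) l)) (hadd (s p) (hscal (-1) l)) < eps;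
  kx_fn : forall x z, X x -> X z -> fn (kx x) z = k x z;
  kx_repr : forall x f, X x -> inner (kx x) f = fn f x;
  dkx_fn : forall a x z, (a < d)%nat -> X x -> X z ->
    fn (dkx a x) z = pderiv (fun s => k s z) a x;
  dkx_repr : forall a x f, (a < d)%nat -> X x -> pd (fn f) a x (inner (dkx a x) f)
}.

Fixpoint hsum d X k (Hs : RKHS d X k) (m : nat) (g : nat -> elt Hs) : elt Hs :=
  match m with O => hzero Hs | S m' => hadd Hs (hsum Hs m' g) (g m') end.

Definition f_ab d X k (Hs : RKHS d X k) (n : nat) (x : nat -> pt)
  (al : nat -> R) (be : nat -> nat -> R) : elt Hs :=
  hadd Hs (hsum Hs n (fun i => hscal Hs (al i) (kx Hs (x i))))
          (hsum Hs n (fun i => hsum Hs d (fun a => hscal Hs (be a i) (dkx Hs a (x i))))).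

Definition loss d X k (Hs : RKHS d X k) (n : nat) (x : nat -> pt) (y : nat -> R)
  (f : elt Hs) : R :=
  / INR n * sumR n (fun i => (y i - fn Hs f (x i)) ^ 2).
Definition dnorm d X k (Hs : RKHS d X k) (n : nat) (x : nat -> pt) (a : nat)
  (f : elt Hs) : R :=
  sqrt (/ INR n * sumR n (fun i => (pderiv (fn Hs f) a (x i)) ^ 2)).

(** Regularizers: Lasso, group Lasso (partition of {0..d-1} given by the group
    index map grp into G groups), elastic net with parameter mu. *)
Inductive regularizer : Type :=
| Lasso
| GroupLasso (G : nat) (grp : nat -> nat)
| ElasticNet (mu : R).

Definition psize (d : nat) (grp : nat -> nat) (g : nat) : R :=
  sumR d (fun a => if Nat.eqb (grp a) g then 1 else 0).

Definition valid_reg (d : nat) (r : regularizer) : Prop :=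
  match r with
  | Lasso => True
  | GroupLasso G grp => (forall a, (a < d)%nat -> (grp a < G)%nat) /\
                        (forall g, (g < G)%nat -> exists a, (a < d)%nat /\ grp a = g)
  | ElasticNet mu => 0 <= mu <= 1
  end.

Definition Rhat d X k (Hs : RKHS d X k) (n : nat) (x : nat -> pt)
  (r : regularizer) (f : elt Hs) : R :=
  match r with
  | Lasso => sumR d (fun a => dnorm Hs n x a f)
  | GroupLasso G grp =>
      sumR G (fun g => psize d grp g *
        sqrt (sumR d (fun a => if Nat.eqb (grp a) g then (dnorm Hs n x a f) ^ 2 else 0)))
  | ElasticNet mu =>
      mu * sumR d (fun a => dnorm Hs n x a f) + (1 - mu) * sumR d (fun a => (dnorm Hs n x a f) ^ 2)
  end.

(** Matrices (0-based indices; beta_{ai} is [be a i]). *)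
Definition Kmat (k : pt -> pt -> R) (x : nat -> pt) (i j : nat) : R := k (x i) (x j).
Definition Dmat (k : pt -> pt -> R) (x : nat -> pt) (a i j : nat) : R :=
  pderiv (fun s => k s (x j)) a (x i).
Definition Lmat (k : pt -> pt -> R) (x : nat -> pt) (a b i j : nat) : R :=
  pderiv (fun s => pderiv (fun r => k s r) b (x j)) a (x i).

Definition norm2 (n : nat) (v : nat -> R) : R := sqrt (sumR n (fun i => v i ^ 2)).
Definition Kal (n : nat) k x (al : nat -> R) (i : nat) : R :=
  sumR n (fun j => Kmat k x i j * al j).
Definition DTbe (d n : nat) k x (be : nat -> nat -> R) (j : nat) : R :=
  sumR d (fun a => sumR n (fun i => Dmat k x a i j * be a i)).
Definition Lbe (d n : nat) k x (be : nat -> nat -> R) (a i : nat) : R :=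
  sumR d (fun b => sumR n (fun j => Lmat k x a b i j * be b j)).
Definition DLv (d n : nat) k x (al : nat -> R) (be : nat -> nat -> R) (a i : nat) : R :=
  sumR n (fun j => Dmat k x a i j * al j) + Lbe d n k x be a i.

Definition J1 (d n : nat) k x (y : nat -> R) al be : R :=
  / INR n * (norm2 n (fun i => y i - Kal n k x al i - DTbe d n k x be i)) ^ 2.
Definition J3 (d n : nat) k x al be : R :=
  sumR n (fun i => al i * Kal n k x al i)
  + 2 * sumR n (fun i => al i * DTbe d n k x be i)
  + sumR d (fun a => sumR n (fun i => be a i * Lbe d n k x be a i)).
Definition J2 (d n : nat) k x (r : regularizer) al be : R :=
  match r with
  | Lasso => / sqrt (INR n) * sumR d (fun a => norm2 n (DLv d n k x al be a))
  | GroupLasso G grp =>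
      / sqrt (INR n) * sumR G (fun g => psize d grp g *
        (* Euclidean norm of the stacked vector (ddot D^g alpha + ddot L^g beta) *)
        sqrt (sumR d (fun a => if Nat.eqb (grp a) g
                               then sumR n (fun i => DLv d n k x al be a i ^ 2) else 0)))
  | ElasticNet mu =>
      mu / sqrt (INR n) * sumR d (fun a => norm2 n (DLv d n k x al be a))
      + (1 - mu) / INR n * sumR d (fun a => (norm2 n (DLv d n k x al be a)) ^ 2)
  end.

Definition is_inf (E : R -> Prop) (m : R) : Prop :=
  (forall z, E z -> m <= z) /\ (forall b, (forall z, E z -> b <= z) -> b <= m).

(* Main.v *)
Require Import Defs.
From Stdlib Require Import Reals Lra Lia ClassicalEpsilon Setoid Morphisms.
Open Scope R_scope.
Set Implicit Arguments.

Lemma sumR_ext m f g : (forall i, (i < m)%nat -> f i = g i) -> sumR m f = sumR m g.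
Proof. induction m; simpl; intros H; auto. rewrite IHm by (intros; apply H; lia). rewrite (H m) by lia. auto. Qed.

Lemma sumR_plus m f g : sumR m (fun i => f i + g i) = sumR m f + sumR m g.
Proof. induction m; simpl; [lra|]. rewrite IHm; lra. Qed.

Lemma sumR_scal m c f : sumR m (fun i => c * f i) = c * sumR m f.
Proof. induction m; simpl; [lra|]. rewrite IHm; lra. Qed.

Lemma sumR_zero m : sumR m (fun _ => 0) = 0.
Proof. induction m; simpl; [lra|]. rewrite IHm; lra. Qed.

Lemma sumR_swap m p F : sumR m (fun i => sumR p (fun j => F i j)) = sumR p (fun j => sumR m (fun i => F i j)).
Proof. induction m; simpl. now rewrite sumR_zero. rewrite IHm, <- sumR_plus. auto. Qed.

Lemma sumR_nonneg m f : (forall i, (i < m)%nat -> 0 <= f i) -> 0 <= sumR m f.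
Proof. induction m; simpl; intros H; [lra|]. assert (0 <= f m) by (apply H; lia). assert (0 <= sumR m f) by (apply IHm; intros; apply H; lia). lra. Qed.

Lemma sumR_split p q f : sumR (p + q) f = sumR p f + sumR q (fun t => f (p + t)%nat).
Proof. induction q; simpl. rewrite Nat.add_0_r; lra. rewrite Nat.add_succ_r; simpl. rewrite IHq; lra. Qed.

Lemma sumR_block d n G : sumR (d * n) G = sumR d (fun a => sumR n (fun i => G (a * n + i)%nat)).
Proof. induction d; simpl; auto. rewrite Nat.add_comm, sumR_split, IHd. auto. Qed.

Lemma sumR_single d a c : (a < d)%nat -> sumR d (fun j => if Nat.eqb j a then c else 0) = c.
Proof.
  induction d; intros H; [lia|]. simpl. destruct (Nat.eq_dec a d).
  - subst. rewrite Nat.eqb_refl. rewrite (@sumR_ext d _ (fun _ => 0)). rewrite sumR_zero; lra.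
    intros i Hi. destruct (Nat.eqb_spec i d); [lia|auto].
  - rewrite IHd by lia. destruct (Nat.eqb_spec d a); [lia|lra].
Qed.

Lemma inner_zero d X k (Hs : RKHS d X k) u : inner Hs (hzero Hs) u = 0.
Proof.
  assert (E : hzero Hs = hscal Hs 0 (hzero Hs)).
  { apply fn_ext. intros z Hz. rewrite fn_scal, fn_zero by auto. lra. }
  rewrite E, inner_scal. lra.
Qed.

Lemma inner_hsum d X k (Hs : RKHS d X k) m g u :
  inner Hs (hsum Hs m g) u = sumR m (fun j => inner Hs (g j) u).
Proof. induction m; simpl. apply inner_zero. rewrite inner_add, IHm. auto. Qed.

Lemma inner_comb d X k (Hs : RKHS d X k) m c v u :
  inner Hs (hsum Hs m (fun j => hscal Hs (c j) (v j))) u = sumR m (fun j => c j * inner Hs (v j) u).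
Proof. rewrite inner_hsum. apply sumR_ext. intros. apply inner_scal. Qed.

Lemma proj d X k (Hs : RKHS d X k) (v : nat -> elt Hs) (m : nat) : forall (f : elt Hs),
  exists c : nat -> R, forall l, (l < m)%nat ->
    inner Hs (v l) f = sumR m (fun j => c j * inner Hs (v l) (v j)).
Proof.
  induction m; intros f.
  { exists (fun _ => 0). intros; lia. }
  destruct (IHm f) as [c Hc]. destruct (IHm (v m)) as [e He].
  set (G := fun l j => inner Hs (v l) (v j)).
  set (w := hadd Hs (v m) (hscal Hs (-1) (hsum Hs m (fun j => hscal Hs (e j) (v j))))).
  assert (A : forall u, inner Hs w u = inner Hs (v m) u - sumR m (fun j => e j * inner Hs (v j) u)).
  { intros u. unfold w. rewrite inner_add, inner_scal, inner_comb. lra. }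
  assert (B : forall j, (j < m)%nat -> inner Hs w (v j) = 0).
  { intros j Hj. rewrite A. rewrite (@sumR_ext m _ (fun i => e i * inner Hs (v j) (v i))).
    rewrite <- He by auto. rewrite inner_sym. lra.
    intros i Hi. rewrite inner_sym. auto. }
  assert (W : inner Hs w w = G m m - sumR m (fun i => e i * G i m)).
  { rewrite A. rewrite (@sumR_ext m _ (fun j => e j * 0)).
    rewrite (@sumR_ext m _ (fun _ => 0)) by (intros; ring). rewrite sumR_zero. rewrite inner_sym, A. unfold G. lra.
    intros i Hi. rewrite inner_sym, B; auto. }
  set (r := if Req_EM_T (inner Hs w w) 0 then 0 else inner Hs w f / inner Hs w w).
  assert (RW : r * inner Hs w w = inner Hs w f).
  { unfold r. destruct (Req_EM_T (inner Hs w w) 0) as [H0|H0].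
    - apply inner_def in H0. rewrite H0, !inner_zero. lra.
    - field. auto. }
  assert (C : inner Hs w f = inner Hs (v m) f - sumR m (fun j => c j * G m j)).
  { rewrite A. cut (sumR m (fun j => e j * inner Hs (v j) f) = sumR m (fun j => c j * G m j)); [lra|].
    rewrite (@sumR_ext m _ (fun i => sumR m (fun j => e i * (c j * G i j)))).
    rewrite sumR_swap. apply sumR_ext. intros j Hj.
    rewrite (@sumR_ext m _ (fun i => c j * (e i * G i j))) by (intros; ring).
    rewrite sumR_scal. f_equal.
    assert (Hb := B j Hj). rewrite A in Hb. unfold G. fold G in Hb. lra.
    intros i Hi. rewrite Hc by auto. rewrite <- sumR_scal. apply sumR_ext. intros; unfold G; ring. }
  exists (fun j => if Nat.ltb j m then c j - r * e j else r).
  intros l Hl. simpl. rewrite Nat.ltb_irrefl.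
  rewrite (@sumR_ext m _ (fun j => c j * G l j + (- r) * (e j * G l j))).
  2:{ intros j Hj. apply Nat.ltb_lt in Hj. rewrite Hj. unfold G. ring. }
  rewrite sumR_plus, sumR_scal.
  destruct (Nat.eq_dec l m) as [->|Hlm].
  - rewrite (@sumR_ext m (fun j => e j * G m j) (fun i => e i * G i m)).
    2:{ intros; unfold G; rewrite inner_sym; auto. }
    rewrite W in RW. unfold G in *. nra.
  - assert (Hl' : (l < m)%nat) by lia. rewrite Hc by auto. rewrite He by auto.
    unfold G. lra.
Qed.

Lemma pd_unique g a x l1 l2 : pd g a x l1 -> pd g a x l2 -> l1 = l2.
Proof. unfold pd. apply uniqueness_limite. Qed.

Lemma pderiv_eq g a x l : pd g a x l -> pderiv g a x = l.
Proof.
  intros H. unfold pderiv. eapply pd_unique; [|exact H].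
  apply (epsilon_spec (inhabits 0) (fun l => pd g a x l)). eauto.
Qed.

Lemma pd_local g h a x l : pd g a x l ->
  (exists del, 0 < del /\ forall t, Rabs (t - x a) < del -> g (upd x a t) = h (upd x a t)) ->
  pd h a x l.
Proof.
  unfold pd, derivable_pt_lim. intros H [del [Hdel Heq]] eps Heps.
  destruct (H eps Heps) as [delta Hd].
  assert (Hm : 0 < Rmin delta del) by (apply Rmin_pos; [apply cond_pos|auto]).
  exists (mkposreal _ Hm). intros h0 Hh0 Hh. simpl in Hh.
  assert (E1 : Rabs (x a + h0 - x a) < del).
  { replace (x a + h0 - x a) with h0 by ring. apply Rlt_le_trans with (1 := Hh). apply Rmin_r. }
  assert (E2 : Rabs (x a - x a) < del).
  { replace (x a - x a) with 0 by ring. rewrite Rabs_R0. auto. }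
  rewrite <- (Heq _ E1), <- (Heq _ E2). apply Hd; auto.
  apply Rlt_le_trans with (1 := Hh). apply Rmin_l.
Qed.

Lemma near_upd d (X : pt -> Prop) x a : open_in_Rd d X -> X x -> (a < d)%nat ->
  exists del, 0 < del /\ forall t, Rabs (t - x a) < del -> X (upd x a t).
Proof.
  intros HX Hx Ha. destruct (HX x Hx) as [Hin [eps [He Hz]]].
  exists eps. split; auto. intros t Ht. apply Hz.
  - intros j Hj. unfold upd. destruct (Nat.eqb_spec j a); [lia|]. apply Hin; auto.
  - unfold Defs.dist. rewrite (@sumR_ext d _ (fun j => if Nat.eqb j a then Rabs (t - x a) else 0)).
    rewrite sumR_single by auto. auto.
    intros j Hj. unfold upd. destruct (Nat.eqb_spec j a).
    + subst. rewrite Rabs_minus_sym. auto.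
    + replace (x j - x j) with 0 by ring. apply Rabs_R0.
Qed.

Lemma inner_kk d X k (Hs : RKHS d X k) xi xj : X xi -> X xj ->
  inner Hs (kx Hs xi) (kx Hs xj) = k xj xi.
Proof. intros. rewrite kx_repr, kx_fn; auto. Qed.

Lemma inner_kd d X k (Hs : RKHS d X k) a xi xj : (a < d)%nat -> X xi -> X xj ->
  inner Hs (kx Hs xi) (dkx Hs a xj) = pderiv (fun s => k s xi) a xj.
Proof. intros. rewrite kx_repr, dkx_fn; auto. Qed.

Lemma pderiv_inner d X k (Hs : RKHS d X k) a z f : (a < d)%nat -> X z ->
  pderiv (fn Hs f) a z = inner Hs (dkx Hs a z) f.
Proof. intros. apply pderiv_eq. apply dkx_repr; auto. Qed.

Lemma swap_pd d (X : pt -> Prop) k z xj b : open_in_Rd d X -> symmetric_on X k -> C2_on d X k ->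
  X z -> X xj -> (b < d)%nat ->
  pderiv (fun s => k s z) b xj = pderiv (fun r => k z r) b xj.
Proof.
  intros hX hsym [[_ hC1] _] Hz Hj Hb.
  destruct (proj1 (hC1 (false, b) Hb) xj z Hj Hz) as [l Hl]. unfold pd2 in Hl; simpl in Hl.
  rewrite (pderiv_eq Hl). symmetry. apply pderiv_eq. eapply pd_local; [exact Hl|].
  destruct (near_upd xj hX Hj Hb) as [del [Hd Hn]]. exists del; split; auto.
Qed.

Lemma inner_dd d X k (Hs : RKHS d X k) a b xi xj :
  open_in_Rd d X -> symmetric_on X k -> C2_on d X k ->
  (a < d)%nat -> (b < d)%nat -> X xi -> X xj ->
  inner Hs (dkx Hs a xi) (dkx Hs b xj) = pderiv (fun s => pderiv (fun r => k s r) b xj) a xi.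
Proof.
  intros hX hsym hC2 Ha Hb Hi Hj. symmetry. apply pderiv_eq.
  eapply pd_local; [apply (@dkx_repr d X k Hs a xi (dkx Hs b xj) Ha Hi)|].
  destruct (near_upd xi hX Hi Ha) as [del [Hd Hn]]. exists del; split; auto.
  intros t Ht. rewrite dkx_fn; auto. apply (@swap_pd d X k); auto.
Qed.

#[export] Instance sumR_proper m : Proper (pointwise_relation nat eq ==> eq) (sumR m).
Proof. intros f g H. apply sumR_ext. intros; apply H. Qed.

Lemma inner_fab d X k (Hs : RKHS d X k) n x al be u :
  inner Hs (f_ab Hs n x al be) u =
  sumR n (fun j => al j * inner Hs (kx Hs (x j)) u)
  + sumR n (fun j => sumR d (fun a => be a j * inner Hs (dkx Hs a (x j)) u)).
Proof.
  unfold f_ab. rewrite inner_add, inner_comb, inner_hsum. f_equal.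
  apply sumR_ext. intros. apply inner_comb.
Qed.

Lemma fn_fab d X k (Hs : RKHS d X k) n x al be i :
  (forall j, (j < n)%nat -> X (x j)) -> (i < n)%nat ->
  fn Hs (f_ab Hs n x al be) (x i) = Kal n k x al i + DTbe d n k x be i.
Proof.
  intros hx Hi. rewrite <- kx_repr by auto. rewrite inner_sym, inner_fab.
  unfold Kal, DTbe, Kmat, Dmat. f_equal.
  - apply sumR_ext. intros j Hj. rewrite inner_kk by auto. ring.
  - rewrite sumR_swap. apply sumR_ext. intros a Ha. apply sumR_ext. intros j Hj.
    rewrite inner_sym, inner_kd by auto. ring.
Qed.

Lemma d_fab d X k (Hs : RKHS d X k) n x al be a i :
  open_in_Rd d X -> symmetric_on X k -> C2_on d X k ->
  (forall j, (j < n)%nat -> X (x j)) -> (a < d)%nat -> (i < n)%nat ->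
  pderiv (fn Hs (f_ab Hs n x al be)) a (x i) = DLv d n k x al be a i.
Proof.
  intros hX hsym hC2 hx Ha Hi. rewrite pderiv_inner by auto. rewrite inner_sym, inner_fab.
  unfold DLv, Lbe, Dmat, Lmat. f_equal.
  - apply sumR_ext. intros j Hj. rewrite inner_kd by auto. ring.
  - rewrite sumR_swap. apply sumR_ext. intros b Hb. apply sumR_ext. intros j Hj.
    rewrite inner_sym, inner_dd by auto. ring.
Qed.

Lemma norm_fab d X k (Hs : RKHS d X k) n x al be :
  open_in_Rd d X -> symmetric_on X k -> C2_on d X k ->
  (forall j, (j < n)%nat -> X (x j)) ->
  inner Hs (f_ab Hs n x al be) (f_ab Hs n x al be) = J3 d n k x al be.
Proof.
  intros hX hsym hC2 hx. rewrite inner_fab.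
  rewrite (@sumR_ext n _ (fun j => al j * Kal n k x al j + al j * DTbe d n k x be j)).
  2:{ intros j Hj. rewrite kx_repr, fn_fab by auto. ring. }
  rewrite (@sumR_ext n (fun j => sumR d (fun a => be a j * inner Hs (dkx Hs a (x j)) (f_ab Hs n x al be)))
     (fun j => sumR d (fun a => be a j * sumR n (fun i => Dmat k x a j i * al i)) +
               sumR d (fun a => be a j * Lbe d n k x be a j))).
  2:{ intros j Hj. rewrite <- sumR_plus. apply sumR_ext. intros a Ha.
      rewrite <- pderiv_inner by auto. rewrite d_fab by auto. unfold DLv. ring. }
  rewrite !sumR_plus. unfold J3.
  assert (E1 : sumR n (fun j => sumR d (fun a => be a j * Lbe d n k x be a j)) =
               sumR d (fun a => sumR n (fun i => be a i * Lbe d n k x be a i))) by apply sumR_swap.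
  assert (E2 : sumR n (fun j => sumR d (fun a => be a j * sumR n (fun i => Dmat k x a j i * al i))) =
               sumR n (fun i => al i * DTbe d n k x be i)).
  { unfold DTbe.
    transitivity (sumR n (fun j => sumR n (fun i => sumR d (fun a => al i * (Dmat k x a j i * be a j))))).
    { apply sumR_ext. intros j Hj. rewrite sumR_swap.
      apply sumR_ext; intros a Ha. rewrite <- sumR_scal. apply sumR_ext; intros i Hi. ring. }
    rewrite sumR_swap. apply sumR_ext. intros i Hi. rewrite <- sumR_scal. rewrite sumR_swap.
    apply sumR_ext; intros a Ha. rewrite <- sumR_scal. apply sumR_ext; intros j Hj. ring. }
  rewrite E1, E2. ring.
Qed.

Lemma sqrt_scale N S : 0 < N -> sqrt (/ N * S) = / sqrt N * sqrt S.
Proof. intros HN. rewrite sqrt_mult_alt by (left; apply Rinv_0_lt_compat; auto). rewrite sqrt_inv. auto. Qed.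

Lemma sq_nonneg_sum m f : 0 <= sumR m (fun i => f i ^ 2).
Proof. apply sumR_nonneg. intros. apply pow2_ge_0. Qed.

Lemma loss_fab d X k (Hs : RKHS d X k) n x y al be :
  (forall j, (j < n)%nat -> X (x j)) ->
  loss Hs n x y (f_ab Hs n x al be) = J1 d n k x y al be.
Proof.
  intros hx. unfold loss, J1, norm2. rewrite pow2_sqrt by apply sq_nonneg_sum. f_equal.
  apply sumR_ext. intros i Hi. rewrite fn_fab by auto. f_equal. ring.
Qed.

Lemma dnorm_fab d X k (Hs : RKHS d X k) n x al be a :
  open_in_Rd d X -> symmetric_on X k -> C2_on d X k ->
  (forall j, (j < n)%nat -> X (x j)) -> (0 < n)%nat -> (a < d)%nat ->
  dnorm Hs n x a (f_ab Hs n x al be) = / sqrt (INR n) * norm2 n (DLv d n k x al be a).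
Proof.
  intros hX hsym hC2 hx hn Ha. unfold dnorm, norm2. rewrite <- sqrt_scale by (apply lt_0_INR; auto).
  f_equal. f_equal. apply sumR_ext. intros i Hi. rewrite d_fab by auto. auto.
Qed.

Lemma dnorm2_fab d X k (Hs : RKHS d X k) n x al be a :
  open_in_Rd d X -> symmetric_on X k -> C2_on d X k ->
  (forall j, (j < n)%nat -> X (x j)) -> (0 < n)%nat -> (a < d)%nat ->
  dnorm Hs n x a (f_ab Hs n x al be) ^ 2 = / INR n * sumR n (fun i => DLv d n k x al be a i ^ 2).
Proof.
  intros hX hsym hC2 hx hn Ha. unfold dnorm. rewrite pow2_sqrt.
  f_equal. apply sumR_ext. intros i Hi. rewrite d_fab by auto. auto.
  apply Rmult_le_pos. left; apply Rinv_0_lt_compat, lt_0_INR; auto. apply sq_nonneg_sum.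
Qed.

Lemma Rhat_fab d X k (Hs : RKHS d X k) n x r al be :
  open_in_Rd d X -> symmetric_on X k -> C2_on d X k ->
  (forall j, (j < n)%nat -> X (x j)) -> (0 < n)%nat ->
  Rhat Hs n x r (f_ab Hs n x al be) = J2 d n k x r al be.
Proof.
  intros hX hsym hC2 hx hn. assert (HN : 0 < INR n) by (apply lt_0_INR; auto).
  destruct r as [|G grp|mu]; unfold Rhat, J2; cbv beta iota.
  - rewrite <- sumR_scal. apply sumR_ext. intros a Ha. apply dnorm_fab; auto.
  - rewrite <- sumR_scal. apply sumR_ext. intros g Hg.
    rewrite (@sumR_ext d _ (fun a => / INR n * (if Nat.eqb (grp a) g then sumR n (fun i => DLv d n k x al be a i ^ 2) else 0))).
    + rewrite sumR_scal, sqrt_scale by auto. ring.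
    + intros a Ha. destruct (Nat.eqb (grp a) g). apply dnorm2_fab; auto. ring.
  - unfold Rdiv. rewrite !Rmult_assoc, <- !sumR_scal. f_equal; apply sumR_ext; intros a Ha.
    + rewrite dnorm_fab; auto.
    + rewrite dnorm2_fab by auto. unfold norm2. rewrite pow2_sqrt by apply sq_nonneg_sum. auto.
Qed.

Lemma reduce d X k (Hs : RKHS d X k) n x (f : elt Hs) :
  exists al be,
    (forall i, (i < n)%nat -> inner Hs (kx Hs (x i)) (f_ab Hs n x al be) = inner Hs (kx Hs (x i)) f) /\
    (forall a i, (a < d)%nat -> (i < n)%nat ->
       inner Hs (dkx Hs a (x i)) (f_ab Hs n x al be) = inner Hs (dkx Hs a (x i)) f) /\
    inner Hs (f_ab Hs n x al be) (f_ab Hs n x al be) <= inner Hs f f.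
Proof.
  set (v := fun t => if Nat.ltb t n then kx Hs (x t) else dkx Hs ((t - n) / n)%nat (x ((t - n) mod n)%nat)).
  destruct (@proj d X k Hs v (n + d * n) f) as [c Hc].
  exists c, (fun a i => c (n + (a * n + i))%nat).
  assert (Hv : forall a i, (i < n)%nat -> v (n + (a * n + i))%nat = dkx Hs a (x i)).
  { intros a i Hi. unfold v. destruct (Nat.ltb_spec (n + (a * n + i)) n); [lia|].
    replace (n + (a * n + i) - n)%nat with (n * a + i)%nat by lia.
    rewrite <- (Nat.div_unique (n * a + i) n a i), <- (Nat.mod_unique (n * a + i) n a i); auto. }
  assert (Key : forall u, inner Hs (f_ab Hs n x c (fun a i => c (n + (a * n + i))%nat)) u =
                          sumR (n + d * n) (fun t => c t * inner Hs (v t) u)).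
  { intros u. rewrite inner_fab, sumR_split, sumR_block. f_equal.
    - apply sumR_ext. intros i Hi. unfold v. destruct (Nat.ltb_spec i n); [auto|lia].
    - rewrite sumR_swap. apply sumR_ext. intros i Hi. apply sumR_ext. intros a Ha.
      rewrite Hv by auto. auto. }
  set (g := f_ab Hs n x c (fun a i => c (n + (a * n + i))%nat)) in *.
  assert (Orth : forall l, (l < n + d * n)%nat -> inner Hs (v l) g = inner Hs (v l) f).
  { intros l Hl. rewrite Hc by auto. rewrite inner_sym, Key. apply sumR_ext. intros; rewrite inner_sym; auto. }
  assert (Hgf : inner Hs g g = inner Hs g f).
  { rewrite !Key. apply sumR_ext. intros t Ht. rewrite Orth; auto. }
  split; [|split].
  - intros i Hi. assert (E := Orth i ltac:(lia)). unfold v in E. destruct (Nat.ltb_spec i n); [auto|lia].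
  - intros a i Ha Hi. rewrite <- Hv by auto. apply Orth. nia.
  - assert (P := inner_pos Hs (hadd Hs f (hscal Hs (-1) g))).
    rewrite inner_add, inner_scal, (inner_sym Hs f), (inner_sym Hs g), !inner_add, !inner_scal in P.
    rewrite (inner_sym Hs f g) in P. lra.
Qed.

Lemma inf_exists (S : R -> Prop) lb : (exists z, S z) -> (forall z, S z -> lb <= z) -> exists m, is_inf S m.
Proof.
  intros [z0 Hz0] Hlb.
  destruct (completeness (fun z => S (- z))) as [M [HM1 HM2]].
  { exists (- lb). intros z Hz. apply Hlb in Hz. lra. }
  { exists (- z0). rewrite Ropp_involutive. auto. }
  exists (- M). split.
  - intros z Hz. assert (z' : - z <= M). { apply HM1. rewrite Ropp_involutive. auto. } lra.
  - intros b Hb. assert (M <= - b). { apply HM2. intros z Hz. apply Hb in Hz. lra. } lra.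
Qed.

Lemma obj_same d X k (Hs : RKHS d X k) n x y r (f g : elt Hs) :
  (forall j, (j < n)%nat -> X (x j)) ->
  (forall i, (i < n)%nat -> inner Hs (kx Hs (x i)) g = inner Hs (kx Hs (x i)) f) ->
  (forall a i, (a < d)%nat -> (i < n)%nat -> inner Hs (dkx Hs a (x i)) g = inner Hs (dkx Hs a (x i)) f) ->
  loss Hs n x y g = loss Hs n x y f /\ Rhat Hs n x r g = Rhat Hs n x r f.
Proof.
  intros hx H1 H2.
  assert (Hd : forall a, (a < d)%nat -> dnorm Hs n x a g = dnorm Hs n x a f).
  { intros a Ha. unfold dnorm. f_equal. f_equal. apply sumR_ext. intros i Hi.
    rewrite !pderiv_inner by auto. rewrite H2; auto. }
  split.
  - unfold loss. f_equal. apply sumR_ext. intros i Hi. rewrite <- !kx_repr by auto. rewrite H1; auto.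
  - destruct r; unfold Rhat.
    + apply sumR_ext. intros; apply Hd; auto.
    + apply sumR_ext. intros g0 _. f_equal. f_equal. apply sumR_ext. intros a Ha. rewrite Hd; auto.
    + f_equal; f_equal; apply sumR_ext; intros a Ha; rewrite Hd; auto.
Qed.

Lemma obj_nonneg d X k (Hs : RKHS d X k) n x y r tau nu (f : elt Hs) :
  (0 < n)%nat -> valid_reg d r -> 0 <= tau -> 0 <= nu ->
  0 <= loss Hs n x y f + tau * Rhat Hs n x r f + nu * inner Hs f f.
Proof.
  intros hn hr ht hnu.
  assert (HN : 0 < / INR n) by (apply Rinv_0_lt_compat, lt_0_INR; auto).
  assert (L : 0 <= loss Hs n x y f).
  { unfold loss. apply Rmult_le_pos; [lra|]. apply sumR_nonneg. intros. apply pow2_ge_0. }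
  assert (Rn : 0 <= Rhat Hs n x r f).
  { destruct r; unfold Rhat.
    - apply sumR_nonneg; intros; apply sqrt_pos.
    - apply sumR_nonneg; intros. apply Rmult_le_pos; [|apply sqrt_pos].
      unfold psize. apply sumR_nonneg. intros. destruct (Nat.eqb _ _); lra.
    - simpl in hr. apply Rplus_le_le_0_compat; apply Rmult_le_pos; try lra;
      apply sumR_nonneg; intros; [apply sqrt_pos|apply pow2_ge_0]. }
  assert (I := inner_pos Hs f).
  assert (0 <= tau * Rhat Hs n x r f) by (apply Rmult_le_pos; auto).
  assert (0 <= nu * inner Hs f f) by (apply Rmult_le_pos; auto). lra.
Qed.
Unset Implicit Arguments.

Theorem proposition2 (d n : nat) (X : pt -> Prop) (k : pt -> pt -> R)
  (hX : open_in_Rd d X) (hsym : symmetric_on X k) (hpsd : psd_on X k)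
  (hC2 : C2_on d X k) (Hs : RKHS d X k)
  (x : nat -> pt) (y : nat -> R) (hn : (0 < n)%nat)
  (hx : forall i, (i < n)%nat -> X (x i))
  (r : regularizer) (hr : valid_reg d r) :
  (forall (al : nat -> R) (be : nat -> nat -> R),
      loss Hs n x y (f_ab Hs n x al be) = J1 d n k x y al be
   /\ Rhat Hs n x r (f_ab Hs n x al be) = J2 d n k x r al be
   /\ inner Hs (f_ab Hs n x al be) (f_ab Hs n x al be) = J3 d n k x al be)
  /\
  (forall tau nu : R, 0 <= tau -> 0 <= nu ->
     (exists m : R,
        is_inf (fun z => exists f : elt Hs,
                  z = loss Hs n x y f + tau * Rhat Hs n x r f + nu * inner Hs f f) m
     /\ is_inf (fun z => exists (al : nat -> R) (be : nat -> nat -> R),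
                  z = J1 d n k x y al be + tau * J2 d n k x r al be + nu * J3 d n k x al be) m)
     /\
     (forall (al : nat -> R) (be : nat -> nat -> R),
        (forall (al' : nat -> R) (be' : nat -> nat -> R),
           J1 d n k x y al be + tau * J2 d n k x r al be + nu * J3 d n k x al be
           <= J1 d n k x y al' be' + tau * J2 d n k x r al' be' + nu * J3 d n k x al' be')
        <->
        (forall f : elt Hs,
           loss Hs n x y (f_ab Hs n x al be) + tau * Rhat Hs n x r (f_ab Hs n x al be)
             + nu * inner Hs (f_ab Hs n x al be) (f_ab Hs n x al be)
           <= loss Hs n x y f + tau * Rhat Hs n x r f + nu * inner Hs f f))).
Proof.
  assert (P1 : forall (al : nat -> R) (be : nat -> nat -> R),
      loss Hs n x y (f_ab Hs n x al be) = J1 d n k x y al be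
   /\ Rhat Hs n x r (f_ab Hs n x al be) = J2 d n k x r al be
   /\ inner Hs (f_ab Hs n x al be) (f_ab Hs n x al be) = J3 d n k x al be).
  { intros al be. split; [apply loss_fab; auto|split; [apply Rhat_fab; auto|apply norm_fab; auto]]. }
  split; [exact P1|]. intros tau nu ht hnu.
  set (Obj := fun f : elt Hs => loss Hs n x y f + tau * Rhat Hs n x r f + nu * inner Hs f f).
  set (J := fun al be => J1 d n k x y al be + tau * J2 d n k x r al be + nu * J3 d n k x al be).
  assert (OJ : forall al be, Obj (f_ab Hs n x al be) = J al be).
  { intros al be. unfold Obj, J. destruct (P1 al be) as [E1 [E2 E3]]. rewrite E1, E2, E3. auto. }
  assert (Red : forall f, exists al be, J al be <= Obj f).
  { intros f. destruct (reduce Hs n x f) as [al [be [H1 [H2 H3]]]]. exists al, be.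
    rewrite <- OJ. unfold Obj.
    destruct (@obj_same d X k Hs n x y r f (f_ab Hs n x al be) hx H1 H2) as [L1 L2].
    rewrite L1, L2. assert (nu * inner Hs (f_ab Hs n x al be) (f_ab Hs n x al be) <= nu * inner Hs f f)
      by (apply Rmult_le_compat_l; auto). lra. }
  split.
  - destruct (@inf_exists (fun z => exists al be, z = J al be) 0) as [m [Hm1 Hm2]].
    { exists (J (fun _ => 0) (fun _ _ => 0)). eauto. }
    { intros z [al [be ->]]. rewrite <- OJ. apply obj_nonneg; auto. }
    exists m. split; [|split; auto].
    split.
    + intros z [f ->]. destruct (Red f) as [al [be Hab]].
      apply Rle_trans with (J al be); auto. apply Hm1. eauto.
    + intros b Hb. apply Hm2. intros z [al [be ->]]. apply Hb. exists (f_ab Hs n x al be).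
      symmetry; apply OJ.
  - intros al be. split.
    + intros Hmin f. fold (Obj (f_ab Hs n x al be)). fold (Obj f). rewrite OJ.
      destruct (Red f) as [al' [be' Hab]]. apply Rle_trans with (J al' be'); auto. apply Hmin.
    + intros Hmin al' be'. fold (J al be). fold (J al' be'). rewrite <- !OJ. apply Hmin.
Qed.
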